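(* There is an absolute constant $C>0$ such that for every integer $n\ge 2$, the cat can localize the mouse up to distance $8$ within time $C\log n$ on the grid $P_n\Box P_n$.
   Context: $P_n\Box P_n$ is the graph with vertex set $[n]\times[n]$ in which $(x,y)$ and $(x',y')$ are adjacent iff $|x-x'|+|y-y'|=1$. All graphs are finite, simple, undirected and connected. The game is played on a graph $G$ in discrete rounds $i=1,2,\ldots$. A game on $G$ is a pair of sequences $((m_i)_{i\in\mathbb N},(c_i)_{i\in\mathbb N})$ of vertices of $G$ such that $m_i\in N_G[m_{i-1}]$ (the closed neighborhood) for every $i\ge 2$; the $m_i$ are the mouse's positions and the $c_i$ (arbitrary vertices) are the cat's probes. Let $d_i=\mathrm{dist}_G(c_i,m_i)$, and for $i\ge2$ let $b_i=1$ if $d_i\le d_{i-1}$ and $b_i=0$ if $d_i>d_{i-1}$. The set $M_i$ is the set of all vertices $u$ for which there exist vertices $\tilde m_1,\ldots,\tilde m_i$ with $\tilde m_i=u$, $\tilde m_j\in N_G[\tilde m_{j-1}]$ for all $2\le j\le i$, and $\mathrm{dist}_G(c_j,\tilde m_j)\le \mathrm{dist}_G(c_{j-1},\tilde m_{j-1})$ if and only if $b_j=1$, for all $2\le j\le i$. For a vertex set $M$, $\mathrm{rad}_G(M)=\min_{u\in V(G)}\max_{m\in M}\mathrm{dist}_G(u,m)$. A strategy for the cat is a triple $(c_1,c_2;f)$ with $c_1,c_2\in V(G)$ and $f:\bigcup_{i\in\mathbb N}\{0,1\}^i\to V(G)$; the cat follows it in a game if its first two probes are $c_1,c_2$ and $c_{i+1}=f(b_2,\ldots,b_i)$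 for all $i\ge2$. The cat can localize the mouse up to distance $d$ within time $t$ on $G$ if there is a strategy $\sigma$ such that for every game on $G$ in which the cat follows $\sigma$, there is a positive integer $i\le t$ with $\mathrm{rad}_G(M_i)\le d$. *)

(* Defs.v *)
From mathcomp Require Import all_boot.
From Stdlib Require Import Reals.

Set Implicit Arguments.
Unset Strict Implicit.
Unset Printing Implicit Defensive.

Section Game.
Variables (T : finType) (e : rel T).

Fixpoint nearby (k : nat) (u v : T) : bool :=
  match k with
  | 0 => u == v
  | k'.+1 => nearby k' u v || [exists w, nearby k' u w && e w v]
  end.

(* graph distance: least k with a walk of length <= k (well defined for
   connected graphs, where the distance is < #|T|) *)
Definition gdist (u v : T) : nat := find (fun k => nearby k u v) (iota 0 #|T|).

Definition cnbhd (u v : T) : bool := (v == u) || e u v.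

(* a game: mouse positions m_1, m_2, ... (index 0 unused), cat probes c_i *)
Definition is_game (m c : nat -> T) : Prop :=
  forall i, 2 <= i -> cnbhd (m i.-1) (m i).

Definition bit (m c : nat -> T) (i : nat) : bool :=
  gdist (c i) (m i) <= gdist (c i.-1) (m i.-1).

Definition Mset (m c : nat -> T) (i : nat) (u : T) : Prop :=
  exists mt : nat -> T, mt i = u /\
    forall j, 2 <= j <= i ->
      cnbhd (mt j.-1) (mt j) /\
      (gdist (c j) (mt j) <= gdist (c j.-1) (mt j.-1)) = bit m c j.

Definition rad_le (M : T -> Prop) (d : nat) : Prop :=
  exists u, forall x, M x -> gdist u x <= d.

Record strategy := Strategy {
  st_c1 : T; st_c2 : T; st_f : seq bool -> T }.

Definition follows (s : strategy) (m c : nat -> T) : Prop :=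
  c 1 = st_c1 s /\ c 2 = st_c2 s /\
  forall i, 2 <= i -> c i.+1 = st_f s [seq bit m c j | j <- iota 2 i.-1].

Definition can_localize (d : nat) (t : R) : Prop :=
  exists s : strategy, forall m c : nat -> T,
    is_game m c -> follows s m c ->
    exists i : nat, 0 < i /\ (INR i <= t)%R /\ rad_le (Mset m c i) d.

End Game.

Definition absdiff (a b : nat) : nat := (a - b) + (b - a).

Definition grid_adj (n : nat) : rel ('I_n * 'I_n)%type :=
  fun p q => absdiff p.1 q.1 + absdiff p.2 q.2 == 1.
Arguments grid_adj n : clear implicits.

(* Main.v *)
Require Import Defs.
From mathcomp Require Import all_boot.
From Stdlib Require Import Reals.
From mathcomp Require Import zify.
From Stdlib Require Import Lra.
Set Implicit Arguments. Unset Strict Implicit.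


Definition update (A' B' u v : nat) (b : bool) : nat * nat :=
  if u.+2 <= v then (if b then ((u + v) %/ 2, B') else (A', (u + v) %/ 2))
  else if v.+2 <= u then (if b then (A', (u + v).+1 %/ 2) else ((u + v).+1 %/ 2, B'))
  else (A', B').

Lemma test1 A' B' u v r z0 z1 w0 w1 (b : bool) :
  A' <= z1 <= B' -> absdiff z0 z1 + absdiff w0 w1 <= 1 ->
  (absdiff v z1 + absdiff r w1 <= absdiff u z0 + absdiff r w0) = b ->
  (update A' B' u v b).1 <= z1 <= (update A' B' u v b).2.
Proof.
rewrite /update /absdiff => Hz Ha Hb.
case: ifP => H1; [|case: ifP => H2].
- case: b Hb => /= Hb; lia.
- case: b Hb => /= Hb; lia.
- by [].
Qed.



Definition L1 (n' : nat) (u v : 'I_n'.+1 * 'I_n'.+1) : nat := absdiff u.1 v.1 + absdiff u.2 v.2.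

Lemma step_toward (n' : nat) (u v : 'I_n'.+1 * 'I_n'.+1) : 0 < L1 u v ->
  exists w : 'I_n'.+1 * 'I_n'.+1, L1 u w = (L1 u v).-1 /\ grid_adj n'.+1 w v.
Proof.
case: u v => [a b] [c d]; rewrite /L1 /= /absdiff => H.
have ha := ltn_ord a; have hb := ltn_ord b; have hc := ltn_ord c; have hd := ltn_ord d.
case: (ltngtP c a) => Hca.
- exists (inord c.+1, d); rewrite /grid_adj /absdiff /= inordK; [lia|lia].
- exists (inord c.-1, d); rewrite /grid_adj /absdiff /= inordK; [lia|lia].
- case: (ltngtP d b) => Hdb.
  + exists (c, inord d.+1); rewrite /grid_adj /absdiff /= inordK; [lia|lia].
  + exists (c, inord d.-1); rewrite /grid_adj /absdiff /= inordK; [lia|lia].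
  + lia.
Qed.

Lemma nearbyP (n' : nat) k (u v : 'I_n'.+1 * 'I_n'.+1) : nearby (grid_adj n'.+1) k u v = (L1 u v <= k).
Proof.
elim: k v => [|k IH] v /=.
- case: u v => [a b] [c d]; rewrite /L1 /absdiff /= xpair_eqE.
  apply/andP/idP => [[/eqP -> /eqP ->]|H]; first lia.
  by split; apply/eqP/val_inj => /=; lia.
- rewrite IH; apply/idP/idP.
  + case/orP => [H|/existsP [w /andP [Hw Hwv]]]; first lia.
    move: Hw Hwv; rewrite IH /grid_adj /L1 /absdiff => Hw /eqP Hwv; lia.
  + move=> H; case: (leqP (L1 u v) k) => Hk; first by apply/orP; left.
    have [w [Hw Hwv]] := step_toward (leq_ltn_trans (leq0n k) Hk).
    apply/orP; right; apply/existsP; exists w; rewrite IH Hw Hwv andbT; lia.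
Qed.

Lemma find_iota_ge d a m : a <= d < a + m ->
  find (fun k => d <= k) (iota a m) = d - a.
Proof.
elim: m a => [|m IH] a H; first lia.
rewrite /= ; case: ifP => Hd; first lia.
rewrite IH; lia.
Qed.

Lemma gdistE (n' : nat) (u v : 'I_n'.+1 * 'I_n'.+1) : gdist (grid_adj n'.+1) u v = L1 u v.
Proof.
rewrite /gdist (eq_find (fun k => nearbyP k u v)) find_iota_ge //.
  by rewrite subn0.
rewrite card_prod card_ord /=.
case: u v => [a b] [c d]; rewrite /L1 /absdiff /=.
have ha := ltn_ord a; have hb := ltn_ord b; have hc := ltn_ord c; have hd := ltn_ord d.
nia.
Qed.


Definition pre (n' : nat) (I : nat * nat) : nat * nat := (I.1 - 3, minn (I.2 + 3) n').
Definition xprobes (n' : nat) (I : nat * nat) : nat * nat :=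
  if (I.1 == 0) || (I.2 < n') then (if I.1 == 0 then I.2 else I.2.+1, I.1.-1)
  else (I.1, n').
Definition yprobes (n' : nat) (I : nat * nat) : nat * nat :=
  if (0 < I.1) && (I.2 < n') then (I.1.-1, I.2.+1) else (I.1, I.2).
Definition stepS (n' : nat) (S : (nat * nat) * (nat * nat)) (bx by_ : bool) :=
  let Ix := pre n' S.1 in let Iy := pre n' S.2 in
  (update Ix.1 Ix.2 (xprobes n' Ix).1 (xprobes n' Ix).2 bx,
   update Iy.1 Iy.2 (yprobes n' Iy).1 (yprobes n' Iy).2 by_).
Fixpoint state (n' : nat) (bs : nat -> bool) (k : nat) : (nat * nat) * (nat * nat) :=
  match k with
  | 0 => ((0, n'), (0, n'))
  | k'.+1 => stepS n' (state n' bs k') (bs (3 * k').+2) (bs (3 * k').+3)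
  end.
Definition mk (n' a b : nat) : 'I_n'.+1 * 'I_n'.+1 := (inord a, inord b).
Definition probeAt (n' : nat) (bs : nat -> bool) (t : nat) : 'I_n'.+1 * 'I_n'.+1 :=
  let S := state n' bs (t.-1 %/ 3) in
  let xp := xprobes n' (pre n' S.1) in let yp := yprobes n' (pre n' S.2) in
  if t.-1 %% 3 == 0 then mk n' xp.1 yp.1
  else if t.-1 %% 3 == 1 then mk n' xp.2 yp.1 else mk n' xp.2 yp.2.

Lemma state_dep n' bs1 bs2 k : (forall j, 2 <= j <= 3 * k -> bs1 j = bs2 j) ->
  state n' bs1 k = state n' bs2 k.
Proof.
elim: k => [|k IH] H //=.
rewrite IH ?H //; try lia.
move=> j Hj; apply: H; lia.
Qed.

Lemma probeAt_dep n' bs1 bs2 t : 0 < t -> (forall j, 2 <= j < t -> bs1 j = bs2 j) ->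
  probeAt n' bs1 t = probeAt n' bs2 t.
Proof.
move=> Ht H; rewrite /probeAt (@state_dep n' bs1 bs2) //.
move=> j Hj; apply: H; lia.
Qed.

Definition strat (n' : nat) : strategy ('I_n'.+1 * 'I_n'.+1)%type :=
  Strategy (probeAt n' (fun _ => false) 1) (probeAt n' (fun _ => false) 2)
    (fun l => probeAt n' (fun j => nth false l (j - 2)) (size l).+2).

Lemma c_eq n' m c : follows (grid_adj n'.+1) (strat n') m c ->
  forall t, 0 < t -> c t = probeAt n' (bit (grid_adj n'.+1) m c) t.
Proof.
case=> H1 [H2 H3] t Ht.
case: t Ht => [//|[|[|t]]] _.
- by rewrite H1; apply: probeAt_dep => // j; lia.
- by rewrite H2; apply: probeAt_dep => // j; lia.
- rewrite H3 //; set l := map _ _.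
  have Hl : size l = t.+1 by rewrite /l size_map size_iota.
  change (probeAt n' (fun j => nth false l (j-2)) (size l).+2 = probeAt n' (bit (grid_adj n'.+1) m c) t.+3).
  rewrite Hl; apply: probeAt_dep => // j Hj.
  rewrite /l (nth_map 0); last by rewrite size_iota; lia.
  rewrite nth_iota; last lia.
  congr bit; lia.
Qed.


Ltac crush := repeat (case: ifP => /=); intros; lia.

Lemma update_bnd n' A' B' u v b : A' <= n' -> B' <= n' -> u <= n' -> v <= n' ->
  (update A' B' u v b).1 <= n' /\ (update A' B' u v b).2 <= n'.
Proof. rewrite /update; case: b; crush. Qed.

Lemma xprobes_bnd n' I : I.1 <= n' -> I.2 <= n' ->
  (xprobes n' I).1 <= n' /\ (xprobes n' I).2 <= n'.
Proof. rewrite /xprobes; crush. Qed.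

Lemma yprobes_bnd n' I : I.1 <= n' -> I.2 <= n' ->
  (yprobes n' I).1 <= n' /\ (yprobes n' I).2 <= n'.
Proof. rewrite /yprobes; crush. Qed.

Lemma pre_bnd n' I : I.1 <= n' -> (pre n' I).1 <= n' /\ (pre n' I).2 <= n'.
Proof. rewrite /pre /=; lia. Qed.

Lemma state_bnd n' bs k : let S := state n' bs k in
  [/\ S.1.1 <= n', S.1.2 <= n', S.2.1 <= n' & S.2.2 <= n'].
Proof.
elim: k => [|k IH] /=; first by split.
case: IH => h1 h2 h3 h4.
rewrite /stepS.
have [p1 p2] := pre_bnd h1.
have [p3 p4] := pre_bnd h3.
have [x1 x2] := xprobes_bnd p1 p2.
have [y1 y2] := yprobes_bnd p3 p4.
have [u1 u2] := update_bnd (bs (3*k).+2) p1 p2 x1 x2.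
have [v1 v2] := update_bnd (bs (3*k).+3) p3 p4 y1 y2.
by split.
Qed.

Lemma update_width A' B' u v b : u + v = A' + B' ->
  (u.+2 <= v) || (v.+2 <= u) || (B' <= A'.+1) ->
  2 * ((update A' B' u v b).2 - (update A' B' u v b).1) <= (B' - A') + 1.
Proof. rewrite /update; case: b; crush. Qed.

Lemma xprobes_ok n' I : I.2 <= n' -> let xp := xprobes n' I in
  xp.1 + xp.2 = I.1 + I.2 /\ ((xp.1.+2 <= xp.2) || (xp.2.+2 <= xp.1) || (I.2 <= I.1.+1)).
Proof. rewrite /xprobes; crush. Qed.

Lemma yprobes_ok n' I : let yp := yprobes n' I in
  yp.1 + yp.2 = I.1 + I.2 /\ ((yp.1.+2 <= yp.2) || (yp.2.+2 <= yp.1) || (I.2 <= I.1.+1)).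
Proof. rewrite /yprobes; crush. Qed.

Lemma state_width n' bs k :
  let S := state n' bs k in let S' := state n' bs k.+1 in
  2 * (S'.1.2 - S'.1.1) <= (S.1.2 - S.1.1) + 7 /\
  2 * (S'.2.2 - S'.2.1) <= (S.2.2 - S.2.1) + 7.
Proof.
move=> S S'; rewrite /S' /= /stepS -/S.
have [h1 h2 h3 h4] := state_bnd n' bs k; rewrite -/S in h1 h2 h3 h4.
have [p1 p2] := pre_bnd h1.
have [p3 p4] := pre_bnd h3.
have [xs xg] := xprobes_ok p2.
have [ys yg] := (@yprobes_ok n' (pre n' S.2)).
have := update_width (bs (3*k).+2) xs xg.
have := update_width (bs (3*k).+3) ys yg.
rewrite /pre /=; lia.
Qed.

Arguments pre : simpl never.
Arguments xprobes : simpl never.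
Arguments yprobes : simpl never.
Arguments update : simpl never.

Lemma L1_mk n' a b (v : 'I_n'.+1 * 'I_n'.+1) : a <= n' -> b <= n' ->
  L1 (mk n' a b) v = absdiff a v.1 + absdiff b v.2.
Proof. by move=> ha hb; rewrite /L1 /mk /= !inordK. Qed.

Definition xp n' (B : nat -> bool) k := xprobes n' (pre n' (state n' B k).1).
Definition yp n' (B : nat -> bool) k := yprobes n' (pre n' (state n' B k).2).

Lemma probeAt0 n' B k : probeAt n' B (3 * k).+1 = mk n' (xp n' B k).1 (yp n' B k).1.
Proof.
rewrite /probeAt /xp /yp.
have -> : (3 * k).+1.-1 %/ 3 = k by lia.
by have -> : (3 * k).+1.-1 %% 3 = 0 by lia.
Qed.
Lemma probeAt1 n' B k : probeAt n' B (3 * k).+2 = mk n' (xp n' B k).2 (yp n' B k).1.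
Proof.
rewrite /probeAt /xp /yp.
have -> : (3 * k).+2.-1 %/ 3 = k by lia.
by have -> : (3 * k).+2.-1 %% 3 = 1 by lia.
Qed.
Lemma probeAt2 n' B k : probeAt n' B (3 * k).+3 = mk n' (xp n' B k).2 (yp n' B k).2.
Proof.
rewrite /probeAt /xp /yp.
have -> : (3 * k).+3.-1 %/ 3 = k by lia.
by have -> : (3 * k).+3.-1 %% 3 = 2 by lia.
Qed.

Lemma probes_bnd n' B k :
  [/\ (xp n' B k).1 <= n', (xp n' B k).2 <= n', (yp n' B k).1 <= n' & (yp n' B k).2 <= n'].
Proof.
have [h1 h2 h3 h4] := state_bnd n' B k.
have [p1 p2] := pre_bnd h1.
have [p3 p4] := pre_bnd h3.
have [x1 x2] := xprobes_bnd p1 p2.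
have [y1 y2] := yprobes_bnd p3 p4.
by split.
Qed.

Lemma invar n' (B : nat -> bool) (c mt : nat -> 'I_n'.+1 * 'I_n'.+1) (i : nat)
 (Hc : forall t, 0 < t -> c t = probeAt n' B t)
 (Hadj : forall j, 2 <= j <= i ->
    absdiff (mt j.-1).1 (mt j).1 + absdiff (mt j.-1).2 (mt j).2 <= 1)
 (Hbit : forall j, 2 <= j <= i -> (L1 (c j) (mt j) <= L1 (c j.-1) (mt j.-1)) = B j) :
 forall k, 3 * k <= i -> let S := state n' B k in
   S.1.1 <= (mt (3 * k).-1).1 <= S.1.2 /\ S.2.1 <= (mt (3 * k)).2 <= S.2.2.
Proof.
elim=> [|k IH] Hk.
  rewrite /=; have := ltn_ord (mt 0).1; have := ltn_ord (mt 0).2; rewrite muln0 /=; lia.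
have e1 : (3 * k.+1).-1 = (3*k).+2 by lia.
have e2 : 3 * k.+1 = (3*k).+3 by lia.
rewrite e1 e2 in Hk *.
have [IHx IHy] := IH ltac:(lia).
set S := state n' B k.
have hx : (pre n' S.1).1 <= (mt (3 * k).+2).1 <= (pre n' S.1).2.
  have := ltn_ord (mt (3 * k).+2).1.
  case: (posnP k) => [k0|kpos].
    by rewrite /S k0 /= /pre /=; lia.
  have := Hadj (3 * k) ltac:(lia); have := Hadj (3 * k).+1 ltac:(lia);
  have := Hadj (3 * k).+2 ltac:(lia).
  move: IHx; rewrite /pre /absdiff -/S /=; lia.
have hy : (pre n' S.2).1 <= (mt (3 * k).+3).2 <= (pre n' S.2).2.
  have := ltn_ord (mt (3 * k).+3).2.
  case: (posnP k) => [k0|kpos].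
    by rewrite /S k0 /= /pre /=; lia.
  have := Hadj (3 * k).+1 ltac:(lia); have := Hadj (3 * k).+2 ltac:(lia);
  have := Hadj (3 * k).+3 ltac:(lia).
  move: IHy; rewrite /pre /absdiff -/S /=; lia.
have [b1 b2 b3 b4] := probes_bnd n' B k.
have Hb2 := Hbit (3 * k).+2 ltac:(lia).
have Hb3 := Hbit (3 * k).+3 ltac:(lia).
rewrite /= Hc // Hc // probeAt1 probeAt0 !L1_mk // in Hb2.
rewrite /= Hc // Hc // probeAt2 probeAt1 !L1_mk // in Hb3.
have Ha2 := Hadj (3 * k).+2 ltac:(lia).
have Ha3 := Hadj (3 * k).+3 ltac:(lia).
simpl in Ha2, Ha3.
rewrite /= /stepS -/S /=.
split.
- apply: test1 Ha2 Hb2; exact: hx.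
- apply: (test1 (z0 := (mt (3 * k).+2).2) (w0 := (mt (3 * k).+2).1) (w1 := (mt (3 * k).+3).1) (r := (xp n' B k).2)).
  + exact: hy.
  + by rewrite addnC.
  + by rewrite [X in X <= _]addnC [X in _ <= X]addnC.
Qed.


Lemma excl q rho sig x1 y1 x2 y2 (b : bool) :
 absdiff x1 x2 + absdiff y1 y2 <= 1 -> rho <= sig ->
 (absdiff q x2 + absdiff sig y2 <= absdiff q x1 + absdiff rho y1) = b ->
 ((q <= x1) && (q <= x2) ->
   (b -> x2 = x1.+1 -> rho + sig < 2 * y2) /\ (~~ b -> x2.+1 = x1 -> 2 * y2 + 2 <= rho + sig)) /\
 ((x1 <= q) && (x2 <= q) ->
   (b -> x2.+1 = x1 -> rho + sig < 2 * y2) /\ (~~ b -> x2 = x1.+1 -> 2 * y2 + 2 <= rho + sig)).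
Proof.
rewrite /absdiff => Ha Hr Hb; case: b Hb => /= Hb; split => /andP [h1 h2]; split => // _ E; lia.
Qed.

Lemma center_ok (left b : bool) n' A Bx C D x1 x2 y2 :
  A <= x1 <= Bx -> Bx <= A + 7 -> absdiff x1 x2 <= 1 -> x2 <= n' ->
  C <= y2 <= D -> D <= C + 7 -> y2 <= n' ->
  D <= C.+1 \/ ((b -> (if left then x2 = x1.+1 else x2.+1 = x1) -> C.+1 <= y2) /\
                (~~ b -> (if left then x2.+1 = x1 else x2 = x1.+1) -> y2.+1 <= D)) ->
  absdiff (minn (if left == b then Bx - 4 else minn (A + 4) (minn (Bx + 1) n')) n') x2 +
  absdiff (minn (if b then D - 3 else minn (C + 3) D) n') y2 <= 8.
Proof.
rewrite /absdiff => h1 h2 h3 h4 h5 h6 h7 h8.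
case: left b h8 => [] [] /= h8.
- case: (x2 =P x1.+1) => E; lia.
- case: (x2.+1 =P x1) => E; lia.
- case: (x2.+1 =P x1) => E; lia.
- case: (x2 =P x1.+1) => E; lia.
Qed.


Lemma final_y A' B' rho sig (b : bool) y2 (P Q : Prop) :
  rho <= sig -> rho + sig = A' + B' -> (rho.+2 <= sig) || (sig.+2 <= rho) || (B' <= A'.+1) ->
  (b -> P -> rho + sig < 2 * y2) -> (~~ b -> Q -> 2 * y2 + 2 <= rho + sig) ->
  let I := update A' B' rho sig b in
  I.2 <= I.1.+1 \/ ((b -> P -> I.1.+1 <= y2) /\ (~~ b -> Q -> y2.+1 <= I.2)).
Proof.
move=> h1 h2 h3 hb hnb /=; rewrite /update.
case: ifP => g1.
  right; case: b hb hnb => hb hnb /=; split => // _ p.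
  + have := hb erefl p; lia.
  + have := hnb erefl p; lia.
case: ifP => g2; first lia.
left => /=; lia.
Qed.

Lemma conv n' B k :
  expn 2 k * ((state n' B k).1.2 - (state n' B k).1.1 - 7) <= n' /\
  expn 2 k * ((state n' B k).2.2 - (state n' B k).2.1 - 7) <= n'.
Proof.
elim: k => [|k [IH1 IH2]]; first by rewrite /= mul1n; lia.
have [w1 w2] := state_width n' B k.
split.
- rewrite expnS -mulnA mulnCA; apply: (leq_trans _ IH1); rewrite leq_mul2l; apply/orP; right; lia.
- rewrite expnS -mulnA mulnCA; apply: (leq_trans _ IH2); rewrite leq_mul2l; apply/orP; right; lia.
Qed.

Lemma small_width p W n' : p * (W - 7) <= n' -> n' < p -> W <= 7.
Proof.
move=> h1 h2; case: (leqP W 7) => // hW.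
have : p <= p * (W - 7) by rewrite leq_pmulr //; lia.
lia.
Qed.


Lemma precont n' (B : nat -> bool) (c mt : nat -> 'I_n'.+1 * 'I_n'.+1) (i : nat)
 (Hc : forall t, 0 < t -> c t = probeAt n' B t)
 (Hadj : forall j, 2 <= j <= i ->
    absdiff (mt j.-1).1 (mt j).1 + absdiff (mt j.-1).2 (mt j).2 <= 1)
 (Hbit : forall j, 2 <= j <= i -> (L1 (c j) (mt j) <= L1 (c j.-1) (mt j.-1)) = B j) k :
 (3 * k).+3 <= i -> let S := state n' B k in
 (pre n' S.1).1 <= (mt (3 * k).+2).1 <= (pre n' S.1).2 /\
 (pre n' S.2).1 <= (mt (3 * k).+3).2 <= (pre n' S.2).2.
Proof.
move=> Hk S.
have [IHx IHy] := @invar n' B c mt i Hc Hadj Hbit k ltac:(lia).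
split.
  have := ltn_ord (mt (3 * k).+2).1.
  case: (posnP k) => [k0|kpos].
    by rewrite /S k0 /= /pre /=; lia.
  have := Hadj (3 * k) ltac:(lia); have := Hadj (3 * k).+1 ltac:(lia);
  have := Hadj (3 * k).+2 ltac:(lia).
  move: IHx; rewrite /pre /absdiff -/S /=; lia.
have := ltn_ord (mt (3 * k).+3).2.
case: (posnP k) => [k0|kpos].
  by rewrite /S k0 /= /pre /=; lia.
have := Hadj (3 * k).+1 ltac:(lia); have := Hadj (3 * k).+2 ltac:(lia);
have := Hadj (3 * k).+3 ltac:(lia).
move: IHy; rewrite /pre /absdiff -/S /=; lia.
Qed.

Lemma INR_expn2 k : INR (expn 2 k) = pow 2 k.
Proof.
elim: k => [|k IH]; first by rewrite expn0.
by rewrite expnS -multE mult_INR IH.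
Qed.

Lemma time_bound (n K : nat) : 2 <= n -> expn 2 K <= n ->
  (INR (3 * K).+3 <= 6 / ln 2 * ln (INR n))%R.
Proof.
move=> Hn HK.
have L2 : (0 < ln 2)%R by rewrite -ln_1; apply: ln_increasing; lra.
have Hn2 : (2 <= INR n)%R by have := le_INR 2 n ltac:(apply/leP; lia); rewrite /=; lra.
have HKn : (INR (expn 2 K) <= INR n)%R by apply: le_INR; apply/leP.
rewrite INR_expn2 in HKn.
have mono : forall x y, (0 < x)%R -> (x <= y)%R -> (ln x <= ln y)%R.
  move=> x y hx hxy; case: (Rle_lt_or_eq_dec _ _ hxy) => h.
    by apply: Rlt_le; apply: ln_increasing.
  by rewrite h; apply: Rle_refl.
have H1 : (INR K * ln 2 <= ln (INR n))%R.
  rewrite -ln_pow; last lra.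
  apply: mono => //; apply: pow_lt; lra.
have H2 : (ln 2 <= ln (INR n))%R by apply: mono; lra.
have HK0 : (0 <= INR K)%R by apply: pos_INR.
rewrite S_INR S_INR S_INR -multE mult_INR.
apply: (Rmult_le_reg_r (ln 2)) => //.
replace (6 / ln 2 * ln (INR n) * ln 2)%R with (6 * ln (INR n))%R; last by field; lra.
simpl; nra.
Qed.


Lemma left_q A' x2 x3 w : A' <= x2 -> absdiff x2 x3 + w <= 1 ->
  (A'.-1 <= x2) && (A'.-1 <= x3).
Proof. rewrite /absdiff; lia. Qed.
Lemma right_q n' x2 x3 : x2 < n'.+1 -> x3 < n'.+1 -> (x2 <= n') && (x3 <= n').
Proof. lia. Qed.
Lemma abs1 x2 x3 w : absdiff x2 x3 + w <= 1 -> absdiff x2 x3 <= 1.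
Proof. rewrite /absdiff; lia. Qed.
Lemma wid a b : b - a <= 7 -> b <= a + 7.
Proof. lia. Qed.

Theorem theorem2 :
  exists C : R, (0 < C)%R /\
    forall n : nat, 2 <= n ->
      can_localize (grid_adj n) 8 (C * ln (INR n))%R.
Proof.
have L2 : (0 < ln 2)%R by rewrite -ln_1; apply: ln_increasing; lra.
exists (6 / ln 2)%R; split.
  apply: Rdiv_lt_0_compat; lra.
case=> [//|n'] Hn.
exists (strat n') => m c _ Hf.
have Hc := c_eq Hf.
set B := bit (grid_adj n'.+1) m c in Hc.
set K := trunc_log 2 n'.+1.
exists (3 * K).+3; split => //; split.
  by apply: time_bound => //; exact: trunc_logP.
set S := state n' B K.
set S' := state n' B K.+1.
set left := ((pre n' S.1).1 == 0) || ((pre n' S.1).2 < n').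
set b := B (3 * K).+3.
set cx := minn (if left == b then S'.1.2 - 4 else minn (S'.1.1 + 4) (minn (S'.1.2 + 1) n')) n'.
set cy := minn (if b then S'.2.2 - 3 else minn (S'.2.1 + 3) S'.2.2) n'.
exists (mk n' cx cy) => x [mt [Hx Hmt]].
have Hadj : forall j, 2 <= j <= (3 * K).+3 ->
    absdiff (mt j.-1).1 (mt j).1 + absdiff (mt j.-1).2 (mt j).2 <= 1.
  move=> j Hj; have [+ _] := Hmt j Hj; rewrite /cnbhd => /orP [/eqP ->|].
    by rewrite /absdiff !subnn.
  by rewrite /grid_adj => /eqP ->.
have Hbit : forall j, 2 <= j <= (3 * K).+3 ->
    (L1 (c j) (mt j) <= L1 (c j.-1) (mt j.-1)) = B j.
  by move=> j Hj; have [_ +] := Hmt j Hj; rewrite !gdistE.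
have [I1 I2] := @invar n' B c mt _ Hc Hadj Hbit K.+1 ltac:(lia).
rewrite (_ : (3 * K.+1).-1 = (3 * K).+2) in I1; last lia.
rewrite (_ : 3 * K.+1 = (3 * K).+3) in I2; last lia.
have [P1 P2] := @precont n' B c mt _ Hc Hadj Hbit K (leqnn _).
have [bx1 bx2 by1 by2] := probes_bnd n' B K.
have Hb3 := Hbit (3 * K).+3 ltac:(lia).
rewrite Hc // Hc // probeAt2 probeAt1 !L1_mk // in Hb3.
have Ha3 := Hadj (3 * K).+3 ltac:(lia).
simpl in Ha3.
have [ys yg] := yprobes_ok n' (pre n' S.2).
have yle : (yp n' B K).1 <= (yp n' B K).2.
  by move: P2; rewrite /yp /yprobes -/S; case: ifP => /=; lia.
have Hq : (xp n' B K).2 = if left then (pre n' S.1).1.-1 else n'.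
  by rewrite /xp /xprobes -/S -/left; case: ifP.
have [EL ER] := excl Ha3 yle Hb3.
have X2b := ltn_ord (mt (3 * K).+2).1.
have X3b := ltn_ord (mt (3 * K).+3).1.
have Y3b := ltn_ord (mt (3 * K).+3).2.
set X2 := nat_of_ord (mt (3 * K).+2).1.
set X3 := nat_of_ord (mt (3 * K).+3).1.
set Y3 := nat_of_ord (mt (3 * K).+3).2.
have Hfy := @final_y _ _ _ _ b Y3
   (if left then X3 = X2.+1 else X3.+1 = X2)
   (if left then X3.+1 = X2 else X3 = X2.+1)
   yle ys yg.
have hb : b -> (if left then X3 = X2.+1 else X3.+1 = X2) ->
    (yp n' B K).1 + (yp n' B K).2 < 2 * Y3.
  move: Hq EL ER; rewrite -/b; case hl: left => Hq EL ER.
    by apply: (EL _).1; rewrite Hq; apply: left_q (proj1 (andP P1)) Ha3.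
  by apply: (ER _).1; rewrite Hq; apply: right_q.
have hnb : ~~ b -> (if left then X3.+1 = X2 else X3 = X2.+1) ->
    2 * Y3 + 2 <= (yp n' B K).1 + (yp n' B K).2.
  move: Hq EL ER; rewrite -/b; case hl: left => Hq EL ER.
    by apply: (EL _).2; rewrite Hq; apply: left_q (proj1 (andP P1)) Ha3.
  by apply: (ER _).2; rewrite Hq; apply: right_q.
have {}Hfy := Hfy hb hnb.
have Hlt : n' < expn 2 K.+1 by apply: ltnW; exact: (@trunc_log_ltn 2 n'.+1 erefl).
have [c1 c2] := conv n' B K.+1.
have w1 := small_width c1 Hlt.
have w2 := small_width c2 Hlt.
rewrite -Hx gdistE L1_mk; try exact: geq_minr.
apply: (@center_ok left b n' S'.1.1 S'.1.2 S'.2.1 S'.2.2 X2 X3 Y3).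
- exact: I1.
- exact: wid.
- exact: abs1 Ha3.
- by rewrite -ltnS.
- exact: I2.
- exact: wid.
- by rewrite -ltnS.
- exact: Hfy.
Qed.
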